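(* Let $s\ge1$ be an integer and $f,g$ formal power series. Then \[ \zeta_s\odot(f*g)=\sum_{\substack{a+c=s\\ a,c\ge0}}(\zeta_a\odot f)*(\zeta_c\odot g)\;-\;\Big(\sum_{\substack{a+c=s-1\\ a,c\ge0}}(\zeta_a\odot f)*(\zeta_c\odot g)\Big)*\zeta_1 . \]
   Context: For an integer $j\ge0$, $\zeta_j(x)=\frac{x^j}{(1-x)^{j+1}}=\sum_{n\ge0}\binom{n}{j}x^n$. For formal power series $f,g$, $f*g:=f(x)\,(1-x)\,g(x)$ (Cauchy product), and the Hadamard product is $\left(\sum_n a_nx^n\right)\odot\left(\sum_n b_nx^n\right)=\sum_n a_nb_nx^n$. *)

(* Defs.v *)
From mathcomp Require Import all_boot all_algebra.
Set Implicit Arguments. Unset Strict Implicit. Unset Printing Implicit Defensive.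
Import GRing.Theory.
Local Open Scope ring_scope.

Definition fps (R : comRingType) := nat -> R.

Definition fps_mul (R : comRingType) (f g : fps R) : fps R :=
  fun n => \sum_(i < n.+1) f i * g (n - i)%N.

Definition one_minus_x (R : comRingType) : fps R :=
  fun n => if n == 0%N then 1 else if n == 1%N then -1 else 0.

Definition fps_star (R : comRingType) (f g : fps R) : fps R :=
  fps_mul f (fps_mul (@one_minus_x R) g).

Definition hadamard (R : comRingType) (f g : fps R) : fps R :=
  fun n => f n * g n.

(* zeta_j(x) = x^j/(1-x)^{j+1} = sum_n binom(n,j) x^n *)
Definition zeta (R : comRingType) (j : nat) : fps R :=
  fun n => ('C(n, j))%:R.

(* Main.v *)
Require Import Defs.
From mathcomp Require Import all_boot all_algebra.
From mathcomp Require Import ring.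
From Stdlib Require Import FunctionalExtensionality.
Import GRing.Theory.
Set Implicit Arguments.
Local Open Scope ring_scope.

Definition sh (R : comRingType) (u : fps R) : fps R :=
  fun n => if n is m.+1 then u m else 0.

Lemma L1 (R : comRingType) (g : fps R) m :
  fps_mul (@one_minus_x R) g m = g m - sh g m.
Proof.
rewrite /fps_mul; case: m => [|m].
  by rewrite big_ord1 /one_minus_x /= mul1r subr0.
rewrite big_ord_recl big_ord_recl big1 /=.
  by rewrite /one_minus_x /= mul1r subn1 /= mulN1r addr0 subn0.
by move=> i _; rewrite /one_minus_x /= mul0r.
Qed.

Lemma L2b (R : comRingType) (f g : fps R) n :
  \sum_(i < n.+1) f i * sh g (n - i)%N = sh (fps_mul f g) n.
Proof.
case: n => [|m]; first by rewrite big_ord1 /= mulr0.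
rewrite big_ord_recr /= subnn /= mulr0 addr0 /fps_mul.
apply: eq_bigr => i _ /=; by rewrite subSn ?leq_ord.
Qed.

Lemma L2 (R : comRingType) (f g : fps R) n :
  fps_star f g n = fps_mul f g n - sh (fps_mul f g) n.
Proof.
rewrite /fps_star -L2b {1}/fps_mul.
under eq_bigr => i _ do rewrite L1 mulrBr.
by rewrite sumrB.
Qed.

Lemma L4 (R : comRingType) (u : fps R) n :
  fps_star u (zeta R 1) n = \sum_(i < n) u i.
Proof.
rewrite /fps_star {1}/fps_mul.
under eq_bigr => i _ do rewrite L1.
case: n => [|m]; first by rewrite big_ord1 big_ord0 /zeta /= bin0n subrr mulr0.
rewrite big_ord_recr /= subnn /zeta /= bin0n subrr mulr0 addr0.
apply: eq_bigr => i _; rewrite subSn ?leq_ord //= !bin1.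
by rewrite -natr1 addrAC subrr add0r mulr1.
Qed.

Lemma L5 (R : comRingType) (A : fps R) n :
  \sum_(i < n) (A i - sh A i) = sh A n.
Proof.
elim: n => [|n IH]; first by rewrite big_ord0.
rewrite big_ord_recr IH /=; case: n {IH} => /= [|n]; first by rewrite !subr0 add0r.
by rewrite addrC subrK.
Qed.

Lemma L6 (R : comRingType) (s : nat) (f g : fps R) n :
  zeta R s n * fps_mul f g n =
  \sum_(a < s.+1) fps_mul (hadamard (zeta R a) f) (hadamard (zeta R (s - a)%N) g) n.
Proof.
rewrite /fps_mul /hadamard exchange_big big_distrr /=.
apply: eq_bigr => i _.
have -> : zeta R s n = \sum_(a < s.+1) (zeta R a i * zeta R (s - a)%N (n - i)%N).
  rewrite /zeta -{1}(subnKC (leq_ord i)) -(binomial.Vandermonde i (n - i)%N s) natr_sum.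
  by apply: eq_bigr => a _; rewrite natrM.
rewrite mulr_suml; apply: eq_bigr => a _; ring.
Qed.

Lemma shsum (R : comRingType) (I : finType) (F : I -> fps R) n :
  \sum_(a : I) sh (F a) n = sh (fun m => \sum_(a : I) F a m) n.
Proof. by case: n => [|n] /=; [rewrite big1 | ]. Qed.

Theorem lemma2p7 (R : comRingType) (s : nat) (hs : (1 <= s)%N) (f g : fps R) :
  hadamard (zeta R s) (fps_star f g) =
  (fun n =>
     \sum_(a < s.+1) fps_star (hadamard (zeta R a) f)
                              (hadamard (zeta R (s - a)%N) g) n
     - fps_star (fun m => \sum_(a < s) fps_star (hadamard (zeta R a) f)
                                  (hadamard (zeta R (s.-1 - a)%N) g) m)
                (zeta R 1) n).
Proof.
have E : forall t, (fun m => \sum_(a < t.+1) fps_mul (hadamard (zeta R a) f)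
                 (hadamard (zeta R (t - a)%N) g) m) = fun m => zeta R t m * fps_mul f g m.
  by move=> t; apply: functional_extensionality => m; rewrite L6.
case: s hs E => // s _ E.
apply: functional_extensionality => n; rewrite L4 /hadamard.
under eq_bigr => a _ do rewrite L2.
rewrite sumrB shsum E -(L6 s.+1 f g n).
have H2 : \sum_(i < n) (\sum_(a < s.+1) fps_star (hadamard (zeta R a) f)
                                  (hadamard (zeta R (s.+1.-1 - a)%N) g) i)
   = sh (fun m => zeta R s m * fps_mul f g m) n.
  rewrite -L5; apply: eq_bigr => i _; rewrite -(E s) (L6 s f g i).
  rewrite -shsum -sumrB; apply: eq_bigr => a _; exact: L2.
rewrite H2 L2.
case: n {H2} => [|n] /=; first by rewrite /zeta bin0n /= !mul0r !subr0.
rewrite /zeta binS natrD; ring.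
Qed.
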